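(* Let $G=(V,E)$ be a finite, simple, connected graph on $n=n(G)$ vertices with maximum degree $\Delta\ge 2$. Then $Z(G)\le \frac{(\Delta-2)n+2}{\Delta-1}$, and if equality $Z(G)=\frac{(\Delta-2)n+2}{\Delta-1}$ holds, then $G$ is regular.
   Context: All graphs are finite, simple and undirected. A set $S\subseteq V$ is a zero forcing set of $G$ if the following process colors every vertex: initially the vertices of $S$ are colored and all others uncolored; repeatedly, whenever a colored vertex has at most one uncolored neighbor, that neighbor becomes colored. The zero forcing number $Z(G)$ is the minimum cardinality of a zero forcing set of $G$. *)

(* Defs.v *)
From mathcomp Require Import all_boot.
Set Implicit Arguments. Unset Strict Implicit. Unset Printing Implicit Defensive.

(* A finite simple graph: vertex type T : finType, adjacency e : rel T,
   assumed symmetric and irreflexive in the theorem statement. *)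

Definition deg (T : finType) (e : rel T) (v : T) : nat := #|[set u | e v u]|.

Definition maxdeg (T : finType) (e : rel T) : nat := \max_(v : T) deg e v.

Definition zf_step (T : finType) (e : rel T) (A : {set T}) : {set T} :=
  A :|: [set u | [exists v, [&& v \in A, e v u &
           [forall w, (e v w && (w != u)) ==> (w \in A)]]]].

(* Final coloured set: the step is monotone and inflationary, so #|T| rounds
   suffice to reach the fixpoint. *)
Definition zf_closure (T : finType) (e : rel T) (S : {set T}) : {set T} :=
  iter #|T| (zf_step e) S.

Definition zero_forcing (T : finType) (e : rel T) (S : {set T}) : bool :=
  zf_closure e S == [set: T].

Lemma zero_forcing_exists (T : finType) (e : rel T) :
  exists n, [exists S : {set T}, (#|S| == n) && zero_forcing e S].
Proof.
exists #|T|; apply/existsP; exists [set: T].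
rewrite cardsT eqxx /= /zero_forcing /zf_closure.
apply/eqP; elim: #|T| => //= n ->.
by apply/setP => x; rewrite !inE.
Qed.

Definition Z (T : finType) (e : rel T) : nat := ex_minn (zero_forcing_exists e).

(* Main.v *)
Require Import Defs.
From mathcomp Require Import all_boot.
From mathcomp Require Import zify.

Lemma step_incr (T : finType) (e : rel T) (A : {set T}) : A \subset zf_step e A.
Proof. by apply/subsetP => x; rewrite inE => ->. Qed.

Lemma step_mono (T : finType) (e : rel T) (A B : {set T}) :
  A \subset B -> zf_step e A \subset zf_step e B.
Proof.
move=> AB; apply/subsetP => u; rewrite !inE => /orP [uA|/existsP [v /and3P [vA evu /forallP H]]].
  by rewrite (subsetP AB _ uA).
apply/orP; right; apply/existsP; exists v; rewrite (subsetP AB _ vA) evu /=.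
apply/forallP => w; apply/implyP => hw; apply: (subsetP AB); exact: (implyP (H w) hw).
Qed.

Lemma iter_mono (T : finType) (e : rel T) k (A B : {set T}) :
  A \subset B -> iter k (zf_step e) A \subset iter k (zf_step e) B.
Proof. by move=> AB; elim: k => //= k IH; apply: step_mono. Qed.

Lemma iter_incr (T : finType) (e : rel T) k m (A : {set T}) :
  k <= m -> iter k (zf_step e) A \subset iter m (zf_step e) A.
Proof.
move=> /subnK <-; elim: (m - k) => //= d IH.
apply: (subset_trans IH); exact: step_incr.
Qed.

Lemma iter_sub (T : finType) (e : rel T) k (A : {set T}) :
  A \subset iter k (zf_step e) A.
Proof. exact: (@iter_incr _ e 0 k A (leq0n k)). Qed.

Lemma grow (T : finType) (e : rel T) (S C N : {set T}) x u :
  S \subset C -> C \subset iter #|C| (zf_step e) S -> x \in C -> u \notin C -> e x u ->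
  N = [set w | e x w & w \notin C] ->
  [/\ (S :|: (N :\ u)) \subset (C :|: N),
      (C :|: N) \subset iter #|C :|: N| (zf_step e) (S :|: (N :\ u)),
      #|S :|: (N :\ u)| + 1 = #|S| + #|N|,
      #|C :|: N| = #|C| + #|N| & u \in N].
Proof.
move=> SC CI xC uC exu hN.
have uN : u \in N by rewrite hN inE exu uC.
have NC : forall w, w \in N -> w \notin C by move=> w; rewrite hN inE => /andP [].
have cardN : #|N| = 1 + #|N :\ u| by rewrite (cardsD1 u N) uN.
have cardCN : #|C :|: N| = #|C| + #|N|.
  rewrite cardsU; have -> : C :&: N = set0.
    by apply/setP => w; rewrite !inE; case wN: (w \in N); rewrite ?andbF // (negbTE (NC _ wN)).
  by rewrite cards0 subn0.
have cardSN : #|S :|: (N :\ u)| = #|S| + #|N :\ u|.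
  rewrite cardsU; have -> : S :&: (N :\ u) = set0.
    apply/setP => w; rewrite !inE; case wN: (w \in N); rewrite ?andbF //.
    by case wS: (w \in S) => //; move: (NC _ wN); rewrite (subsetP SC _ wS).
  by rewrite cards0 subn0.
split => //; last by lia.
- apply/subsetP => w; rewrite !inE => /orP [wS|/andP [_ wN]].
    by rewrite (subsetP SC _ wS).
  by rewrite wN orbT.
set S' := S :|: (N :\ u).
have SS' : S \subset S' by apply/subsetP => w wS; rewrite !inE wS.
set I := iter #|C| (zf_step e) S'.
have CI' : C \subset I := subset_trans CI (@iter_mono _ e _ _ _ SS').
have NI : N :\ u \subset I.
  apply: subset_trans (@iter_sub _ e _ _); apply/subsetP => w wN; by rewrite /S' inE wN orbT.
have sub1 : C :|: N \subset zf_step e I.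
  apply/subsetP => w; rewrite inE => /orP [wC|wN].
    exact: (subsetP (@step_incr _ e _)) (subsetP CI' _ wC).
  case: (eqVneq w u) => [->|wu].
    rewrite /zf_step !inE; apply/orP; right; apply/existsP; exists x.
    rewrite (subsetP CI' _ xC) exu /=; apply/forallP => z; apply/implyP => /andP [exz zu].
    case zC: (z \in C); first exact: (subsetP CI').
    by apply: (subsetP NI); rewrite !inE zu hN inE exz zC.
  apply: (subsetP (@step_incr _ e _)); apply: (subsetP NI); by rewrite !inE wu.
apply: subset_trans sub1 _.
have -> : zf_step e I = iter #|C|.+1 (zf_step e) S' by [].
apply: iter_incr; lia.
Qed.

Lemma finish (T : finType) (e : rel T) D c (hD : 2 <= D) (S C : {set T}) f :
  C = [set: T] -> C \subset iter #|C| (zf_step e) S ->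
  #|S| + f = #|C| -> #|S| + c <= (D-2)*f + 2 ->
  exists S' : {set T}, zero_forcing e S' /\ (D-1)*#|S'| + c <= (D-2)*#|T| + 2.
Proof.
move=> CT CI hf hc.
exists S; split.
  rewrite /zero_forcing /zf_closure eqEsubset subsetT /=.
  apply: subset_trans (@iter_incr _ e #|C| #|T| S (max_card _)).
  by rewrite -CT.
move: hf; rewrite CT cardsT => hf.
rewrite -hf.
have -> : D - 1 = (D - 2) + 1 by lia.
move: (D - 2) hc => d hc.
rewrite mulnDl mulnDr mul1n; lia.
Qed.

Lemma process (T : finType) (e : rel T) (e_sym : symmetric e)
  (e_conn : forall x y : T, connect e x y) D c
  (hdeg : forall x, deg e x <= D) (hD : 2 <= D) :
  forall m (S C : {set T}) f c0, #|~: C| <= m -> c0 \in C -> S \subset C ->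
  C \subset iter #|C| (zf_step e) S ->
  (forall y, y \in C -> exists2 w, w \in C & e y w) ->
  #|S| + f = #|C| -> #|S| + c <= (D-2)*f + 2 ->
  exists S' : {set T}, zero_forcing e S' /\ (D-1)*#|S'| + c <= (D-2)*#|T| + 2.
Proof.
elim=> [|m IH] S C f c0 hm c0C SC CI nbC hf hc.
- have CT : C = [set: T].
    apply/setP => w; rewrite inE; apply/negP => /negP wC.
    have : 0 < #|~: C| by apply/card_gt0P; exists w; rewrite inE.
    by rewrite leqn0 in hm; rewrite (eqP hm).
  exact: (@finish _ e D c hD S C f CT CI hf hc).
- case: (boolP (C == [set: T])) => [/eqP CT|CnT].
    exact: (@finish _ e D c hD S C f CT CI hf hc).
  case: (boolP [exists x, [exists u, [&& x \in C, u \notin C & e x u]]]) => [|hno].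
  + clear CnT; move=> /existsP [x /existsP [u /and3P [xC uC exu]]].
    set N := [set w | e x w & w \notin C].
    have [S'C' C'I cS cC uN] := @grow _ e S C N x u SC CI xC uC exu erefl.
    have [y yC exy] := nbC x xC.
    have cardN : #|N| + 1 <= D.
      have sub : N \subset [set w | e x w] :\ y.
        apply/subsetP => w; rewrite !inE => /andP [exw wC]; rewrite exw andbT.
        by apply/eqP => wy; move: wC; rewrite wy yC.
      have h2 := subset_leq_card sub.
      have := cardsD1 y [set w | e x w]; rewrite inE exy /= => h1.
      have h3 := hdeg x; rewrite /deg in h3.
      clear -h1 h2 h3; lia.
    apply: (IH (S :|: (N :\ u)) (C :|: N) f.+1 c0) => //.
    * have h1 := cardsC C; have h2 := cardsC (C :|: N).
      have h3 : 0 < #|N| by apply/card_gt0P; exists u.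
      clear -h1 h2 h3 cC hm; lia.
    * by rewrite inE c0C.
    * move=> w; rewrite inE => /orP [wC|wN].
        by have [z zC ewz] := nbC w wC; exists z => //; rewrite inE zC.
      by exists x; rewrite ?inE ?xC // e_sym; move: wN; rewrite inE => /andP [].
    * clear -cS cC hf uN; lia.
    * rewrite mulnS; clear -cS hc cardN; lia.
  + exfalso.
    have [u0 _ u0C] : exists2 u0, u0 \in [set: T] & u0 \notin C.
      by apply/subsetPn; move: CnT; rewrite eqEsubset subsetT.
    have cl : closed e C.
      move=> a b eab; case aC: (a \in C); case bC: (b \in C) => //.
        by move: hno; rewrite negb_exists => /forallP /(_ a); rewrite negb_exists => /forallP /(_ b); rewrite aC bC eab.
      by move: hno; rewrite negb_exists => /forallP /(_ b); rewrite negb_exists => /forallP /(_ a); rewrite aC bC e_sym eab.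
    by move: (closed_connect cl (e_conn c0 u0)); rewrite c0C (negbTE u0C).
Qed.

Lemma from_vertex (T : finType) (e : rel T) (e_sym : symmetric e) (e_irr : irreflexive e)
  (e_conn : forall x y : T, connect e x y) D
  (hdeg : forall x, deg e x <= D) (hD : 2 <= D) v u (evu : e v u) :
  exists S' : {set T}, zero_forcing e S' /\
    (D-1)*#|S'| + (D - deg e v) <= (D-2)*#|T| + 2.
Proof.
set N := [set w | e v w & w \notin [set v]].
have uv : u \notin [set v].
  by rewrite inE; apply/eqP => uv; move: evu; rewrite uv e_irr.
have vv : v \in [set v] by rewrite inE.
have [SC CI cS cC uN] := @grow _ e [set v] [set v] N v u (subxx _)
  (@iter_sub _ e _ _) vv uv evu erefl.
have hN : #|N| <= deg e v.
  apply: subset_leq_card; apply/subsetP => w; rewrite !inE => /andP [] //.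
have hv := hdeg v.
rewrite cards1 in cS cC.
apply: (@process _ e e_sym e_conn D _ hdeg hD _ _ _ 1 v (leqnn _) _ SC CI).
- by rewrite inE vv.
- move=> y; rewrite in_setU => /orP [/set1P ->|yN].
    by exists u => //; rewrite in_setU uN orbT.
  by exists v; rewrite ?inE ?eqxx //; move: yN; rewrite inE e_sym => /andP [].
- clear -cS cC; lia.
- clear -cS hN hv hD; lia.
Qed.

Theorem mainTheorem5 (T : finType) (e : rel T)
  (e_sym : symmetric e) (e_irr : irreflexive e)
  (e_conn : forall x y : T, connect e x y)
  (hD : 2 <= maxdeg e) :
  (maxdeg e - 1) * Z e <= (maxdeg e - 2) * #|T| + 2 /\
  ((maxdeg e - 1) * Z e = (maxdeg e - 2) * #|T| + 2 ->
     forall v : T, deg e v = maxdeg e).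
Proof.
have hdeg : forall x, deg e x <= maxdeg e by move=> x; exact: leq_bigmax.
have key : forall v, exists u, e v u.
  move=> v; case: (boolP (0 < deg e v)) => [h|h0].
    by move: h; rewrite /deg => /card_gt0P [u]; rewrite inE => evu; exists u.
  exfalso.
  have all0 : forall w, deg e w <= 0.
    move=> w; have /connectP [p pth ->] := e_conn v w.
    case: p pth => [|x1 p] /=; first by rewrite leqNgt.
    move=> /andP [evx _]; case/negP: h0; rewrite /deg.
    by apply/card_gt0P; exists x1; rewrite inE.
  have : maxdeg e <= 0 by apply/bigmax_leqP => i _; exact: all0.
  by rewrite leqn0 => /eqP h; rewrite h in hD.
have bound : forall v, (maxdeg e - 1) * Z e + (maxdeg e - deg e v) <= (maxdeg e - 2) * #|T| + 2.
  move=> v; have [u evu] := key v.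
  have [S [zS hS]] := @from_vertex _ e e_sym e_irr e_conn (maxdeg e) hdeg hD v u evu.
  have hZ : Z e <= #|S|.
    rewrite /Z; case: ex_minnP => m _ hmin; apply: hmin.
    by apply/existsP; exists S; rewrite eqxx.
  apply: leq_trans hS; rewrite leq_add2r; exact: leq_mul.
split.
  case: (pickP (@predT T)) => [v _|h].
    exact: leq_trans (leq_addr _ _) (bound v).
  have : maxdeg e <= 0 by apply/bigmax_leqP => i; move: (h i).
  by rewrite leqn0 => /eqP hm; rewrite hm in hD.
move=> heq v; have := bound v; rewrite heq; have := hdeg v.
move: (maxdeg e) (deg e v) (Z e) => a b z; lia.
Qed.
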